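(* Let $u,v>0$ and $0<a,b\le 1$, and consider the map $(x,y)\mapsto\big((1-a)x+auy(1-y),\ (1-b)y+bvx(1-x)\big)$. Let $R_1=u^2v^2-4u^2v-4uv^2+18uv-27$. Provided $R_1\neq 0$: the map has three distinct positive equilibria if and only if $R_1>0$, and it has exactly one positive equilibrium if and only if $R_1<0$ and $uv>1$. Provided $R_1=0$: the map has two distinct positive equilibria if and only if $(u,v)\neq(3,3)$, and it has a unique positive equilibrium, namely $(2/3,2/3)$, if $(u,v)=(3,3)$.
   Context: An equilibrium of the map is a real fixed point $(x^*,y^* )$, i.e. a real solution of $x^*=uy^*(1-y^* )$, $y^*=vx^*(1-x^* )$; it is called positive if $x^*>0$ and $y^*>0$. *)

(* Defs.v *)
From Stdlib Require Import Reals List.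
Open Scope R_scope.

Definition F (u v a b : R) (p : R * R) : R * R :=
  ((1 - a) * fst p + a * u * snd p * (1 - snd p),
   (1 - b) * snd p + b * v * fst p * (1 - fst p)).

Definition equilibrium (u v a b : R) (p : R * R) : Prop := F u v a b p = p.

Definition pos_equilibrium (u v a b : R) (p : R * R) : Prop :=
  equilibrium u v a b p /\ 0 < fst p /\ 0 < snd p.

Definition num_pos_equilibria (u v a b : R) (n : nat) : Prop :=
  exists l : list (R * R), NoDup l /\ length l = n /\
    forall p, In p l <-> pos_equilibrium u v a b p.

Definition resR1 (u v : R) : R :=
  u^2 * v^2 - 4 * u^2 * v - 4 * u * v^2 + 18 * u * v - 27.

(* Main.v *)
Require Import Defs.
From Stdlib Require Import Reals List Lra Psatz.
Import ListNotations.
Open Scope R_scope.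
Definition P (u v t : R) := u*v^2*t^3 - u*v^2*t^2 + u*v*t - 1.
Definition pt (v t : R) : R * R := (1 - t, v*t*(1-t)).

Lemma P_cont u v : continuity (P u v).
Proof. unfold P. reg. Qed.

Lemma eq_char u v a b p : 0 < u -> 0 < v -> 0 < a <= 1 -> 0 < b <= 1 ->
  (pos_equilibrium u v a b p <-> exists t, 0 < t < 1 /\ P u v t = 0 /\ p = pt v t).
Proof.
  intros hu hv ha hb. destruct p as [x y]. unfold pos_equilibrium, equilibrium, F, pt; simpl.
  split.
  - intros [He [hx hy]]. injection He; intros H2 H1.
    assert (Ex : x = u*y*(1-y)).
    { assert (a * (u*y*(1-y) - x) = 0) by lra.
      apply Rmult_integral in H. destruct H; lra. }
    assert (Ey : y = v*x*(1-x)).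
    { assert (b * (v*x*(1-x) - y) = 0) by lra.
      apply Rmult_integral in H. destruct H; lra. }
    assert (hy1 : y < 1).
    { destruct (Rlt_or_le y 1) as [h|h]; auto.
      assert (u*y*(1-y) <= 0). { assert (0 <= u*y) by nra. nra. } lra. }
    assert (hx1 : x < 1).
    { destruct (Rlt_or_le x 1) as [h|h]; auto.
      assert (v*x*(1-x) <= 0). { assert (0 <= v*x) by nra. nra. } lra. }
    exists (1 - x). split; [lra|]. split.
    + assert (K : u*y*(1-y) - x = (1 - (1-x)) * P u v (1-x)).
      { rewrite Ey. unfold P. ring. }
      rewrite <- Ex in K. replace (x - x) with 0 in K by ring.
      symmetry in K. apply Rmult_integral in K. destruct K; lra.
    + f_equal; [ring|]. rewrite Ey. ring.
  - intros [t [ht [hP hp]]]. injection hp; intros Hy Hx. subst x y.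
    assert (K : u*(v*t*(1-t))*(1-(v*t*(1-t))) = (1-t) * (P u v t + 1)).
    { unfold P. ring. }
    rewrite hP in K. split; [|split].
    + f_equal.
      * replace (a * u * (v * t * (1 - t)) * (1 - v * t * (1 - t))) with (a * (u*(v*t*(1-t))*(1-(v*t*(1-t))))) by ring.
        rewrite K. ring.
      * ring.
    + lra.
    + assert (0 < v*t) by nra. nra.
Qed.

Lemma P_nonpos u v t : 0 < u -> 0 < v -> t <= 0 -> P u v t < 0.
Proof.
  intros hu hv ht. unfold P.
  assert (0 <= u*v^2*t^2*(1-t)).
  { apply Rmult_le_pos; [|lra]. assert (0 < u*v^2) by (apply Rmult_lt_0_compat; nra).
    assert (0 <= t^2) by nra. nra. }
  assert (0 <= u*v*(-t)) by (assert (0 < u*v) by nra; nra).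
  nra.
Qed.

Lemma root_pos u v t : 0 < u -> 0 < v -> P u v t = 0 -> 0 < t.
Proof. intros hu hv h. destruct (Rlt_or_le 0 t); auto. pose proof (P_nonpos u v t hu hv H). lra. Qed.

Lemma root_uv u v t : 0 < u -> 0 < v -> 0 < t < 1 -> P u v t = 0 -> 1 < u*v.
Proof.
  intros hu hv ht h. destruct (Rlt_or_le 1 (u*v)) as [H|H]; auto. exfalso.
  assert (K : P u v t = u*v*t*(1 - v*t*(1-t)) - 1) by (unfold P; ring).
  assert (0 < v*t*(1-t)) by (assert (0<v*t) by nra; nra).
  assert (u*v*t < 1) by nra.
  assert (0 < u*v*t) by (assert (0 < u*v) by nra; nra).
  destruct (Rle_or_lt (1 - v*t*(1-t)) 0).
  - assert (u*v*t*(1 - v*t*(1-t)) <= 0) by nra. lra.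
  - assert (u*v*t*(1 - v*t*(1-t)) < 1) by nra. lra.
Qed.

Definition Q u v r1 r2 := u*v^2*(r1^2+r1*r2+r2^2) - u*v^2*(r1+r2) + u*v.

Lemma Q0 u v r1 r2 : P u v r1 = 0 -> P u v r2 = 0 -> r1 <> r2 -> Q u v r1 r2 = 0.
Proof.
  intros h1 h2 hn. assert (K : P u v r1 - P u v r2 = (r1 - r2) * Q u v r1 r2) by (unfold P, Q; ring).
  rewrite h1, h2, Rminus_0_r in K. symmetry in K. apply Rmult_integral in K. destruct K; [lra|auto].
Qed.

Lemma sum3 u v r1 r2 r3 : 0 < u -> 0 < v -> P u v r1 = 0 -> P u v r2 = 0 -> P u v r3 = 0 ->
  r1 <> r2 -> r1 <> r3 -> r2 <> r3 -> r1 + r2 + r3 = 1.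
Proof.
  intros hu hv h1 h2 h3 n12 n13 n23.
  pose proof (Q0 _ _ _ _ h1 h2 n12). pose proof (Q0 _ _ _ _ h1 h3 n13).
  assert (K : Q u v r1 r2 - Q u v r1 r3 = (u*v^2) * (r2 - r3) * (r1+r2+r3-1)) by (unfold Q; ring).
  rewrite H, H0, Rminus_0_r in K. symmetry in K. apply Rmult_integral in K. destruct K as [K|K]; [|lra].
  apply Rmult_integral in K. destruct K as [K|K]; [|lra].
  assert (0 < u*v^2) by (apply Rmult_lt_0_compat; nra). lra.
Qed.

Lemma third u v r1 r2 : P u v r1 = 0 -> P u v r2 = 0 -> r1 <> r2 -> P u v (1 - r1 - r2) = 0.
Proof.
  intros h1 h2 n. pose proof (Q0 _ _ _ _ h1 h2 n).
  assert (K : forall t, P u v t = u*v^2*(t-r1)*(t-r2)*(t-(1-r1-r2)) + t * Q u v r1 r2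
     + P u v r1 - r1 * Q u v r1 r2) by (intros; unfold P, Q; ring).
  rewrite K, H, h1. ring.
Qed.

Lemma disc2 u v r1 r2 : 0 < u -> 0 < v -> P u v r1 = 0 -> P u v r2 = 0 -> r1 <> r2 ->
  resR1 u v = (u*v^2)^2 * ((r1-r2)*(r1-(1-r1-r2))*(r2-(1-r1-r2)))^2.
Proof.
  intros hu hv h1 h2 n. pose proof (Q0 _ _ _ _ h1 h2 n) as HQ.
  set (r3 := 1 - r1 - r2).
  set (e2 := r1*r2 + r3*(r1+r2)). set (e3 := r1*r2*r3).
  assert (He2 : e2 = / v).
  { assert (u*v*(1 - v*e2) = 0) by (rewrite <- HQ; unfold Q, e2, r3; ring).
    apply Rmult_integral in H. destruct H; [nra|].
    apply Rmult_eq_reg_l with v; [rewrite Rinv_r; lra | lra]. }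
  assert (He3 : e3 = / (u*v^2)).
  { assert (K : P u v r1 = r1 * Q u v r1 r2 + (u*v^2*e3 - 1)) by (unfold P, Q, e3, r3; ring).
    rewrite h1, HQ in K. assert (u*v^2 <> 0) by (apply Rgt_not_eq, Rmult_lt_0_compat; nra).
    apply Rmult_eq_reg_l with (u*v^2); [rewrite Rinv_r; lra | auto]. }
  assert (D : ((r1-r2)*(r1-r3)*(r2-r3))^2 = e2^2 - 4*e2^3 - 4*e3 + 18*e2*e3 - 27*e3^2)
    by (unfold e2, e3, r3; ring).
  rewrite D, He2, He3. unfold resR1. field. lra.
Qed.

Lemma v_gt3 u v : 0 < u -> 0 < v -> 0 <= resR1 u v -> (u, v) <> (3, 3) -> 3 < v.
Proof.
  intros hu hv hR hn. destruct (Rlt_or_le 3 v) as [h|h]; auto. exfalso.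
  set (a := v^2 - 4*v).
  assert (ha : a < 0) by (unfold a; nra).
  assert (K : 4*a*resR1 u v = (2*a*u + 18*v - 4*v^2)^2 + 16*v*(3-v)^3) by (unfold a, resR1; ring).
  assert (L : 4*a*resR1 u v <= 0) by nra.
  assert (c : 0 <= (3-v)^3) by (apply pow_le; lra).
  assert (hs2 : 0 <= (2*a*u + 18*v - 4*v^2)^2) by apply pow2_ge_0.
  assert (c0 : 16*v*(3-v)^3 = 0) by nra.
  assert ((3-v)^3 = 0) by nra.
  assert (v = 3).
  { destruct (Req_dec v 3); auto. exfalso. apply (pow_nonzero (3-v) 3); [lra|auto]. }
  subst v. assert (H1 : (2*a*u + 18*3 - 4*3^2)^2 = 0) by lra.
  unfold a in H1. assert (u = 3) by nra. subst. apply hn; auto.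
Qed.

Lemma P_crit u v w : 0 < v -> w^2 = 1 - 3/v ->
  27 * P u v ((1+w)/3) = w*(6*(u*v) - 2*(u*v^2)) + (9*(u*v) - 2*(u*v^2) - 27).
Proof.
  intros hv hw.
  assert (E : u*v^2*(w^2-1) + 3*(u*v) = 0).
  { rewrite hw. field. lra. }
  transitivity (w*(6*(u*v) - 2*(u*v^2)) + (9*(u*v) - 2*(u*v^2) - 27) + w * (u*v^2*(w^2-1) + 3*(u*v))).
  - unfold P. field.
  - rewrite E. ring.
Qed.

Lemma dP_crit u v w : 0 < v -> w^2 = 1 - 3/v ->
  3*(u*v^2)*((1+w)/3)^2 - 2*(u*v^2)*((1+w)/3) + u*v = 0.
Proof.
  intros hv hw.
  assert (E : u*v^2*(w^2-1) + 3*(u*v) = 0).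
  { rewrite hw. field. lra. }
  transitivity ((u*v^2*(w^2-1) + 3*(u*v))/3). { field. } rewrite E. field.
Qed.

Lemma double_root u v r : P u v r = 0 -> 3*(u*v^2)*r^2 - 2*(u*v^2)*r + u*v = 0 ->
  P u v (1 - 2*r) = 0.
Proof.
  intros h1 h2.
  assert (K : forall t, P u v t = u*v^2*(t-r)^2*(t-(1-2*r)) + (t-r)*(3*(u*v^2)*r^2 - 2*(u*v^2)*r + u*v) + P u v r)
    by (intros; unfold P; ring).
  rewrite K, h1, h2. ring.
Qed.

Lemma crit_prod u v s : 0 < u -> 3 < v -> s^2 = 1 - 3/v ->
  P u v ((1-s)/3) * P u v ((1+s)/3) = - resR1 u v / 27.
Proof.
  intros hu hv hs.
  assert (hs' : (-s)^2 = 1 - 3/v) by (rewrite <- hs; ring).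
  pose proof (P_crit u v (-s) ltac:(lra) hs') as H1.
  pose proof (P_crit u v s ltac:(lra) hs) as H2.
  replace (1 + - s) with (1 - s) in H1 by ring.
  assert (E : P u v ((1-s)/3) * P u v ((1+s)/3) = (27 * P u v ((1-s)/3)) * (27 * P u v ((1+s)/3)) / 729) by field.
  rewrite E, H1, H2.
  transitivity (((9 * (u * v) - 2 * (u * v ^ 2) - 27))^2/729 - s^2 * (6 * (u * v) - 2 * (u * v ^ 2))^2/729).
  field. rewrite hs. unfold resR1. field. lra.
Qed.

Definition Rt u v t := 0 < t < 1 /\ P u v t = 0.

Lemma count_iff u v a b n : 0 < u -> 0 < v -> 0 < a <= 1 -> 0 < b <= 1 ->
  (num_pos_equilibria u v a b n <->
   exists ts, NoDup ts /\ length ts = n /\ forall t, In t ts <-> Rt u v t).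
Proof.
  intros hu hv ha hb. unfold num_pos_equilibria. split.
  - intros [l [hnd [hl hin]]].
    exists (map (fun p => 1 - fst p) l). split; [|split].
    + apply NoDup_map_NoDup_ForallPairs; auto.
      intros p q hp hq e. apply hin in hp, hq.
      apply (eq_char u v a b) in hp, hq; auto.
      destruct hp as [t1 [_ [_ ->]]]. destruct hq as [t2 [_ [_ ->]]].
      unfold pt in *; simpl in e. assert (t1 = t2) by lra. subst; auto.
    + rewrite length_map; auto.
    + intros t. rewrite in_map_iff. split.
      * intros [p [e hp]]. apply hin in hp. apply (eq_char u v a b) in hp; auto.
        destruct hp as [t1 [h1 [h2 ->]]]. unfold pt in e; simpl in e.
        assert (t = t1) by lra. rewrite H. split; auto.
      * intros [h1 h2]. exists (pt v t). split; [unfold pt; simpl; ring|].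
        apply hin. apply (eq_char u v a b); auto. exists t; auto.
  - intros [ts [hnd [hl hin]]]. exists (map (pt v) ts). split; [|split].
    + apply NoDup_map_NoDup_ForallPairs; auto.
      intros x y _ _ e. unfold pt in e. injection e; intros. lra.
    + rewrite length_map; auto.
    + intros p. rewrite in_map_iff. rewrite (eq_char u v a b); auto. split.
      * intros [t [<- ht]]. apply hin in ht. exists t. destruct ht; auto.
      * intros [t [h1 [h2 ->]]]. exists t. split; auto. apply hin. split; auto.
Qed.

Lemma three_pos u v t1 t2 t3 : 0 < u -> 0 < v -> Rt u v t1 -> Rt u v t2 -> Rt u v t3 ->
  t1 <> t2 -> t1 <> t3 -> t2 <> t3 -> 0 < resR1 u v.
Proof.
  intros hu hv [_ h1] [_ h2] [_ h3] n12 n13 n23.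
  rewrite (disc2 u v t1 t2); auto.
  pose proof (sum3 u v t1 t2 t3 hu hv h1 h2 h3 n12 n13 n23).
  assert (0 < u*v^2) by (apply Rmult_lt_0_compat; nra).
  set (X := (t1 - t2) * (t1 - (1 - t1 - t2)) * (t2 - (1 - t1 - t2))).
  assert (X <> 0).
  { unfold X. replace (1 - t1 - t2) with t3 by lra.
    repeat apply Rmult_integral_contrapositive_currified; lra. }
  pose proof (Rsqr_pos_lt X H1). pose proof (Rsqr_pos_lt (u*v^2) ltac:(lra)).
  unfold Rsqr in *. simpl. nra.
Qed.

Lemma R1_33 : resR1 3 3 = 0.
Proof. unfold resR1; ring. Qed.

Lemma sqrt_setup v : 3 < v -> exists s, s^2 = 1 - 3/v /\ 0 < s < 1.
Proof.
  intros hv. assert (0 < 1 - 3/v).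
  { assert (3/v < 1). { apply (Rmult_lt_reg_r v); [lra|]. field_simplify; lra. } lra. }
  exists (sqrt (1 - 3/v)). pose proof (sqrt_sqrt (1 - 3/v) ltac:(lra)).
  pose proof (sqrt_lt_R0 _ H).
  assert (3/v > 0) by (apply Rdiv_lt_0_compat; lra).
  split. simpl. rewrite Rmult_1_r. auto. split; auto. nra.
Qed.

Lemma R1pos_three u v : 0 < u -> 0 < v -> 0 < resR1 u v ->
  exists r1 r2 r3, Rt u v r1 /\ Rt u v r2 /\ Rt u v r3 /\ r1 <> r2 /\ r1 <> r3 /\ r2 <> r3.
Proof.
  intros hu hv hR.
  assert (hv3 : 3 < v).
  { apply (v_gt3 u v); auto. lra. intro e. injection e; intros; subst. rewrite R1_33 in hR. lra. }
  destruct (sqrt_setup v hv3) as [s [hs hs01]].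
  pose proof (crit_prod u v s hu hv3 hs) as Hp.
  assert (hs' : (-s)^2 = 1 - 3/v) by (rewrite <- hs; ring).
  pose proof (P_crit u v (-s) ltac:(lra) hs') as H1.
  pose proof (P_crit u v s ltac:(lra) hs) as H2.
  replace (1 + - s) with (1 - s) in H1 by ring.
  assert (hd : P u v ((1-s)/3) > P u v ((1+s)/3)).
  { assert (u*v*(v-3) > 0) by (apply Rmult_lt_0_compat; nra). nra. }
  assert (hm : P u v ((1-s)/3) > 0) by nra.
  assert (hp : P u v ((1+s)/3) < 0) by nra.
  destruct (IVT (P u v) 0 ((1-s)/3) (P_cont u v) ltac:(lra) ltac:(unfold P; lra) hm) as [r1 [hr1 e1]].
  destruct (IVT (fun t => - P u v t) ((1-s)/3) ((1+s)/3)) as [r2 [hr2 e2]].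
  { apply continuity_opp, P_cont. } lra. lra. lra.
  assert (e2' : P u v r2 = 0) by lra.
  assert (r1 <> (1-s)/3) by (intro; subst; lra).
  assert (n12 : r1 <> r2) by lra.
  pose proof (third u v r1 r2 e1 e2' n12) as e3.
  pose proof (disc2 u v r1 r2 hu hv e1 e2' n12) as hD.
  set (r3 := 1 - r1 - r2) in *.
  assert (n13 : r1 <> r3).
  { intro E. rewrite <- E in hD. replace (r1 - r1) with 0 in hD by ring. rewrite hD in hR. simpl in hR. lra. }
  assert (n23 : r2 <> r3).
  { intro E. rewrite <- E in hD. replace (r2 - r2) with 0 in hD by ring. rewrite hD in hR. simpl in hR. lra. }
  pose proof (root_pos u v r1 hu hv e1). pose proof (root_pos u v r2 hu hv e2').
  pose proof (root_pos u v r3 hu hv e3).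
  exists r1, r2, r3. unfold Rt. unfold r3 in *. repeat split; auto; lra.
Qed.

Lemma exists_root u v : 0 < u -> 0 < v -> 1 < u*v -> exists r, Rt u v r.
Proof.
  intros hu hv huv.
  destruct (IVT (P u v) 0 1 (P_cont u v) ltac:(lra) ltac:(unfold P; lra) ltac:(unfold P; lra)) as [r [hr e]].
  exists r. split; auto. split.
  - destruct hr as [[h|h] _]; auto. subst. unfold P in e. lra.
  - destruct hr as [_ [h|h]]; auto. subst. unfold P in e. lra.
Qed.

Lemma two_roots_nonneg u v t1 t2 : 0 < u -> 0 < v -> Rt u v t1 -> Rt u v t2 -> t1 <> t2 -> 0 <= resR1 u v.
Proof.
  intros hu hv [_ h1] [_ h2] n. rewrite (disc2 u v t1 t2); auto.
  apply Rmult_le_pos; apply pow2_ge_0.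
Qed.

Lemma R1zero_two u v : 0 < u -> 0 < v -> resR1 u v = 0 -> (u, v) <> (3, 3) ->
  exists r1 r2, Rt u v r1 /\ Rt u v r2 /\ r1 <> r2 /\ forall t, Rt u v t -> t = r1 \/ t = r2.
Proof.
  intros hu hv hR hn.
  assert (hv3 : 3 < v) by (apply (v_gt3 u v); auto; lra).
  destruct (sqrt_setup v hv3) as [s [hs hs01]].
  pose proof (crit_prod u v s hu hv3 hs) as Hp.
  rewrite hR in Hp. replace (-0/27) with 0 in Hp by field.
  assert (hs' : (-s)^2 = 1 - 3/v) by (rewrite <- hs; ring).
  assert (gen : forall w, w^2 = 1 - 3/v -> w <> 0 -> P u v ((1+w)/3) = 0 ->
     exists r1 r2, Rt u v r1 /\ Rt u v r2 /\ r1 <> r2 /\ forall t, Rt u v t -> t = r1 \/ t = r2).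
  { intros w hw hw0 e. set (r := (1+w)/3) in *.
    pose proof (dP_crit u v w hv hw) as d. fold r in d.
    pose proof (double_root u v r e d) as e2.
    pose proof (root_pos u v r hu hv e). pose proof (root_pos u v _ hu hv e2).
    assert (n : r <> 1 - 2*r) by (unfold r; intro; apply hw0; lra).
    exists r, (1 - 2*r). split; [split; auto; lra|]. split; [split; auto; lra|]. split; auto.
    intros t [ht et]. destruct (Req_dec t r); auto. destruct (Req_dec t (1-2*r)); auto.
    exfalso. pose proof (sum3 u v r (1-2*r) t hu hv e e2 et n ltac:(auto) ltac:(auto)). lra. }
  apply Rmult_integral in Hp. destruct Hp as [e|e].
  - apply (gen (-s)); [exact hs' | lra | replace (1 + - s) with (1 - s) by ring; exact e].
  - apply (gen s); auto; lra.
Qed.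

Lemma roots33 t : P 3 3 t = 0 -> t = 1/3.
Proof.
  intros e. assert (K : P 3 3 t = (3*t-1)^3) by (unfold P; ring).
  rewrite K in e. destruct (Req_dec (3*t-1) 0). lra.
  exfalso. apply (pow_nonzero _ 3 H e).
Qed.

Theorem theorem1 (u v a b : R) (hu : 0 < u) (hv : 0 < v)
  (ha : 0 < a <= 1) (hb : 0 < b <= 1) :
  (resR1 u v <> 0 ->
     (num_pos_equilibria u v a b 3 <-> 0 < resR1 u v) /\
     (num_pos_equilibria u v a b 1 <-> resR1 u v < 0 /\ 1 < u * v)) /\
  (resR1 u v = 0 ->
     (num_pos_equilibria u v a b 2 <-> (u, v) <> (3, 3)) /\
     ((u, v) = (3, 3) ->
        forall p, pos_equilibrium u v a b p <-> p = (2/3, 2/3))).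
Proof.
  split.
  - intros hR. split.
    + rewrite count_iff by auto. split.
      * intros [ts [hnd [hl hin]]].
        destruct ts as [|t1 [|t2 [|t3 [|]]]]; simpl in hl; try discriminate.
        apply NoDup_cons_iff in hnd as [n1 hnd]. apply NoDup_cons_iff in hnd as [n2 _].
        simpl in n1, n2.
        apply (three_pos u v t1 t2 t3); auto; try (apply hin; simpl; tauto); intro E; subst; tauto.
      * intros hpos. destruct (R1pos_three u v hu hv hpos) as [r1 [r2 [r3 [h1 [h2 [h3 [n12 [n13 n23]]]]]]]].
        exists [r1; r2; r3]. split; [|split; [reflexivity|]].
        { constructor. simpl; intuition. constructor. simpl; intuition. constructor. simpl; auto. constructor. }
        intros t. simpl. split.
        { intros [E|[E|[E|[]]]]; subst; auto. }
        intros ht. destruct (Req_dec r1 t); auto. destruct (Req_dec r2 t); auto. right; right; left.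
        destruct h1 as [_ e1], h2 as [_ e2], h3 as [_ e3], ht as [_ et].
        pose proof (sum3 u v r1 r2 r3 hu hv e1 e2 e3 n12 n13 n23).
        pose proof (sum3 u v r1 r2 t hu hv e1 e2 et n12 H H0). lra.
    + rewrite count_iff by auto. split.
      * intros [ts [hnd [hl hin]]].
        destruct ts as [|t1 [|]]; simpl in hl; try discriminate.
        assert (h1 : Rt u v t1) by (apply hin; simpl; auto).
        split.
        -- destruct (Rlt_or_le (resR1 u v) 0) as [h|h]; auto. exfalso.
           assert (hpos : 0 < resR1 u v) by lra.
           destruct (R1pos_three u v hu hv hpos) as [r1 [r2 [r3 [g1 [g2 [g3 [n12 [n13 n23]]]]]]]].
           apply hin in g1, g2. simpl in g1, g2. intuition congruence.
        -- destruct h1 as [h1 e1]. apply (root_uv u v t1); auto.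
      * intros [hneg huv]. destruct (exists_root u v hu hv huv) as [r hr].
        exists [r]. split; [constructor; [simpl; auto|constructor]|split; [reflexivity|]].
        intros t. simpl. split.
        { intros [E|[]]; subst; auto. }
        intros ht. left. destruct (Req_dec r t); auto. exfalso.
        pose proof (two_roots_nonneg u v r t hu hv hr ht H). lra.
  - intros hR. split.
    + rewrite count_iff by auto. split.
      * intros [ts [hnd [hl hin]]] E. injection E; intros; subst u v.
        destruct ts as [|t1 [|t2 [|]]]; simpl in hl; try discriminate.
        apply NoDup_cons_iff in hnd as [n1 _].
        assert (h1 : Rt 3 3 t1) by (apply hin; simpl; auto).
        assert (h2 : Rt 3 3 t2) by (apply hin; simpl; auto).
        destruct h1 as [_ e1], h2 as [_ e2]. apply roots33 in e1, e2. subst.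
        apply n1. simpl. auto.
      * intros hn. destruct (R1zero_two u v hu hv hR hn) as [r1 [r2 [h1 [h2 [n cov]]]]].
        exists [r1; r2]. split; [|split; [reflexivity|]].
        { constructor. simpl; intuition. constructor. simpl; auto. constructor. }
        intros t. simpl. split.
        { intros [E|[E|[]]]; subst; auto. }
        intros ht. destruct (cov t ht); auto.
    + intros E p. injection E; intros; subst u v.
      rewrite (eq_char 3 3 a b p) by (auto; lra). split.
      * intros [t [ht [e ->]]]. apply roots33 in e. subst. unfold pt. f_equal; field.
      * intros ->. exists (1/3). split; [lra|]. split; [unfold P; field|]. unfold pt. f_equal; field.
Qed.
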